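(* For the Earth–Sun system, i.e. with $\mu=\frac{59729}{19885499729}$ and $c=\frac{149896229}{10}\sqrt{\frac{1495978707}{3317816087784734}}$, let $P_0=(\xi_0,\eta_0)$ be an equilibrium point of the relativistic restricted three-body equations lying in the rectangle $$R=\Big[\tfrac{312498095327}{625000000000},\tfrac{312498189077}{625000000000}\Big]\times\Big[\tfrac{43301267124383}{50000000000000},\tfrac{4330127145451}{5000000000000}\Big]$$ (such a point exists; this is the relativistic Lagrangian point $L_4$). Then every eigenvalue of the linearization of the system at $(\xi_0,0,\eta_0,0)$ has zero real part; i.e. the relativistic point $L_4$ of the Earth–Sun system is linearly stable.
   Context: Set $\rho=\sqrt{\xi^2+\eta^2}$, $\rho_1=\sqrt{(\xi+\mu)^2+\eta^2}$, $\rho_2=\sqrt{(\xi+\mu-1)^2+\eta^2}$, $V=\dot\xi^2+\dot\eta^2+2(\xi\dot\eta-\dot\xi\eta)+\rho^2$, $$w_0=\tfrac12(\xi^2+\eta^2)+\frac{1-\mu}{\rho_1}+\frac{\mu}{\rho_2},$$ $$w_1=-\tfrac32\Big(1-\tfrac13\mu(1-\mu)\Big)\rho^2+\tfrac18V^2+\tfrac32\Big(\frac{1-\mu}{\rho_1}+\frac{\mu}{\rho_2}\Big)V-\tfrac12\Big(\frac{(1-\mu)^2}{\rho_1^2}+\frac{\mu^2}{\rho_2^2}\Big)$$ $$\qquad+\mu(1-\mu)\Big[\Big(4\dot\eta+\tfrac{7\xi}{2}\Big)\Big(\frac1{\rho_1}-\frac1{\rho_2}\Big)-\tfrac12\eta^2\Big(\frac{\mu}{\rho_1^3}+\frac{1-\mu}{\rho_2^3}\Big)+\frac{3\mu-2}{2\rho_1}-\frac{1}{\rho_1\rho_2}+\frac{1-3\mu}{2\rho_2}\Big],$$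 $w=w_0+\frac1{c^2}w_1$ (a function of the independent variables $\xi,\dot\xi,\eta,\dot\eta$), and $n=1-\frac{3}{2c^2}\big(1-\frac13\mu(1-\mu)\big)$. The relativistic restricted three-body equations are $$\ddot\xi-2n\dot\eta=\frac{\partial w}{\partial\xi}-\frac{d}{dt}\Big(\frac{\partial w}{\partial\dot\xi}\Big),\qquad \ddot\eta+2n\dot\xi=\frac{\partial w}{\partial\eta}-\frac{d}{dt}\Big(\frac{\partial w}{\partial\dot\eta}\Big).$$ An equilibrium point is a point $(\xi_0,\eta_0)$ at which $\partial w/\partial\xi=\partial w/\partial\eta=0$ with $\dot\xi=\dot\eta=0$. The linearization refers to the Jacobian at $(\xi_0,0,\eta_0,0)$ of the equivalent first-order system in $(\xi,\dot\xi,\eta,\dot\eta)$ (obtained by solving for $\ddot\xi,\ddot\eta$, possible near points where $1+w_{\dot\xi\dot\xi}+w_{\dot\eta\dot\eta}+w_{\dot\xi\dot\xi}w_{\dot\eta\dot\eta}-w_{\dot\xi\dot\eta}^2\ne0$). *)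

(* Defs.v *)
From Stdlib Require Import Reals ClassicalEpsilon.
Open Scope R_scope.

Definition deriv_at (g : R -> R) (x : R) : R :=
  epsilon (inhabits 0) (fun l => derivable_pt_lim g x l).

Definition fun4 := R -> R -> R -> R -> R.

(** Partial derivative with respect to variable k:
    0 = xi, 1 = xidot, 2 = eta, 3 = etadot. *)
Definition Dp (k : nat) (f : fun4) : fun4 := fun a b e d =>
  match k with
  | 0%nat => deriv_at (fun t => f t b e d) a
  | 1%nat => deriv_at (fun t => f a t e d) b
  | 2%nat => deriv_at (fun t => f a b t d) e
  | _ => deriv_at (fun t => f a b e t) d
  end.

Definition rho (xi eta : R) : R := sqrt (xi ^ 2 + eta ^ 2).
Definition rho1 (mu xi eta : R) : R := sqrt ((xi + mu) ^ 2 + eta ^ 2).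
Definition rho2 (mu xi eta : R) : R := sqrt ((xi + mu - 1) ^ 2 + eta ^ 2).

Definition Vf (xi xid eta etad : R) : R :=
  xid ^ 2 + etad ^ 2 + 2 * (xi * etad - xid * eta) + (rho xi eta) ^ 2.

Definition w0 (mu xi eta : R) : R :=
  1/2 * (xi ^ 2 + eta ^ 2) + (1 - mu) / rho1 mu xi eta + mu / rho2 mu xi eta.

Definition w1 (mu xi xid eta etad : R) : R :=
  let r := rho xi eta in
  let r1 := rho1 mu xi eta in
  let r2 := rho2 mu xi eta in
  let V := Vf xi xid eta etad in
  - (3/2) * (1 - 1/3 * mu * (1 - mu)) * r ^ 2
  + 1/8 * V ^ 2
  + 3/2 * ((1 - mu) / r1 + mu / r2) * V
  - 1/2 * ((1 - mu) ^ 2 / r1 ^ 2 + mu ^ 2 / r2 ^ 2)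
  + mu * (1 - mu) *
     ((4 * etad + 7 * xi / 2) * (1 / r1 - 1 / r2)
      - 1/2 * eta ^ 2 * (mu / r1 ^ 3 + (1 - mu) / r2 ^ 3)
      + (3 * mu - 2) / (2 * r1)
      - 1 / (r1 * r2)
      + (1 - 3 * mu) / (2 * r2)).

Definition wfun (mu c : R) : fun4 := fun xi xid eta etad =>
  w0 mu xi eta + 1 / c ^ 2 * w1 mu xi xid eta etad.

Definition nfac (mu c : R) : R :=
  1 - 3 / (2 * c ^ 2) * (1 - 1/3 * mu * (1 - mu)).

(** Solving the equations of motion for (xi'', eta''):
    (1 + w_{xd xd}) xi'' + w_{xd ed} eta'' = 2 n eta' + w_xi - w_{xd xi} xi' - w_{xd eta} eta'
    w_{ed xd} xi'' + (1 + w_{ed ed}) eta'' = -2 n xi' + w_eta - w_{ed xi} xi' - w_{ed eta} eta'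
    where w_{a b} = d/db (dw/da). *)
Definition acc_data (mu c : R) (a b e d : R) : R * R * R * R * R * R :=
  let W := wfun mu c in
  let n := nfac mu c in
  let A := 1 + Dp 1 (Dp 1 W) a b e d in
  let B := Dp 3 (Dp 1 W) a b e d in
  let C := Dp 1 (Dp 3 W) a b e d in
  let D := 1 + Dp 3 (Dp 3 W) a b e d in
  let E1 := 2 * n * d + Dp 0 W a b e d
            - Dp 0 (Dp 1 W) a b e d * b - Dp 2 (Dp 1 W) a b e d * d in
  let E2 := - 2 * n * b + Dp 2 W a b e d
            - Dp 0 (Dp 3 W) a b e d * b - Dp 2 (Dp 3 W) a b e d * d in
  (A, B, C, D, E1, E2).

Definition xidd (mu c : R) : fun4 := fun a b e d =>
  let '(A, B, C, D, E1, E2) := acc_data mu c a b e d in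
  (E1 * D - B * E2) / (A * D - B * C).

Definition etadd (mu c : R) : fun4 := fun a b e d =>
  let '(A, B, C, D, E1, E2) := acc_data mu c a b e d in
  (A * E2 - C * E1) / (A * D - B * C).

Definition field (mu c : R) (i : nat) : fun4 :=
  match i with
  | 0%nat => fun a b e d => b
  | 1%nat => xidd mu c
  | 2%nat => fun a b e d => d
  | _ => etadd mu c
  end.

Definition jacobian (mu c xi0 eta0 : R) : nat -> nat -> R :=
  fun i j => Dp j (field mu c i) xi0 0 eta0 0.

Definition is_equilibrium (mu c xi0 eta0 : R) : Prop :=
  Dp 0 (wfun mu c) xi0 0 eta0 0 = 0 /\ Dp 2 (wfun mu c) xi0 0 eta0 0 = 0.

Record Cpx := mkC { Re : R; Im : R }.
Definition C0 : Cpx := mkC 0 0.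
Definition C1 : Cpx := mkC 1 0.
Definition Cadd (x y : Cpx) : Cpx := mkC (Re x + Re y) (Im x + Im y).
Definition Cneg (x : Cpx) : Cpx := mkC (- Re x) (- Im x).
Definition Csub (x y : Cpx) : Cpx := Cadd x (Cneg y).
Definition Cmul (x y : Cpx) : Cpx :=
  mkC (Re x * Re y - Im x * Im y) (Re x * Im y + Im x * Re y).
Definition Cofr (r : R) : Cpx := mkC r 0.

Fixpoint Csum (f : nat -> Cpx) (n : nat) : Cpx :=
  match n with
  | O => C0
  | S m => Cadd (Csum f m) (f m)
  end.

Fixpoint det (n : nat) (M : nat -> nat -> Cpx) : Cpx :=
  match n with
  | O => C1
  | S m =>
      Csum (fun j =>
        let t := Cmul (M O j)
                   (det m (fun i k => M (S i) (if Nat.ltb k j then k else S k))) in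
        if Nat.even j then t else Cneg t) (S m)
  end.

Definition is_eigenvalue (n : nat) (J : nat -> nat -> R) (l : Cpx) : Prop :=
  det n (fun i j => Csub (if Nat.eqb i j then l else C0) (Cofr (J i j))) = C0.

Definition mu_ES : R := 59729 / 19885499729.
Definition c_ES : R := 149896229 / 10 * sqrt (1495978707 / 3317816087784734).

Definition in_rect (xi eta : R) : Prop :=
  312498095327 / 625000000000 <= xi <= 312498189077 / 625000000000 /\
  43301267124383 / 50000000000000 <= eta <= 4330127145451 / 5000000000000.

(* Main.v *)
Require Import Defs.
From Stdlib Require Import Reals QArith Qreals Qround ZArith Lra Lia ClassicalEpsilon FunctionalExtensionality.
Require Import Stdlib.Reals.Ranalysis5.
Open Scope R_scope.

Lemma dlocal (f g : R -> R) x l :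
  (exists d, 0 < d /\ forall t, Rabs (t - x) < d -> f t = g t) ->
  derivable_pt_lim g x l -> derivable_pt_lim f x l.
Proof.
  intros [d0 [Hd0 Heq]] Hg eps Heps.
  destruct (Hg eps Heps) as [del Hdel].
  assert (Hm : 0 < Rmin del d0) by (apply Rmin_pos; [apply cond_pos|lra]).
  exists (mkposreal _ Hm). intros h Hh Hhd. simpl in Hhd.
  rewrite (Heq (x+h)), (Heq x).
  - apply Hdel; auto. apply Rlt_le_trans with (1:=Hhd), Rmin_l.
  - rewrite Rminus_diag, Rabs_R0; lra.
  - replace (x+h-x) with h by ring. apply Rlt_le_trans with (1:=Hhd), Rmin_r.
Qed.

Lemma dext (f g : R -> R) x l :
  (forall t, f t = g t) -> derivable_pt_lim g x l -> derivable_pt_lim f x l.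
Proof. intros H. apply dlocal. exists 1. split. lra. intros; auto. Qed.

Lemma dval f x l l' : derivable_pt_lim f x l -> l = l' -> derivable_pt_lim f x l'.
Proof. intros H ->; exact H. Qed.

Lemma dconst (a x : R) : derivable_pt_lim (fun _ => a) x 0.
Proof. apply (derivable_pt_lim_const a x). Qed.

Lemma did x : derivable_pt_lim (fun t => t) x 1.
Proof. apply (derivable_pt_lim_id x). Qed.

Lemma dplus f g x l1 l2 : derivable_pt_lim f x l1 -> derivable_pt_lim g x l2 ->
  derivable_pt_lim (fun t => f t + g t) x (l1 + l2).
Proof. intros; apply (derivable_pt_lim_plus f g); auto. Qed.

Lemma dmult f g x l1 l2 : derivable_pt_lim f x l1 -> derivable_pt_lim g x l2 ->
  derivable_pt_lim (fun t => f t * g t) x (l1 * g x + f x * l2).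
Proof. intros; apply (derivable_pt_lim_mult f g); auto. Qed.

Lemma ddiv f g x l1 l2 : derivable_pt_lim f x l1 -> derivable_pt_lim g x l2 -> g x <> 0 ->
  derivable_pt_lim (fun t => f t / g t) x ((l1 * g x - l2 * f x) / (g x)^2).
Proof. intros. eapply dval. apply (derivable_pt_lim_div f g); eauto. unfold Rsqr; field; auto. Qed.

Lemma dinvsqrt q x l : derivable_pt_lim q x l -> 0 < q x ->
  derivable_pt_lim (fun t => / sqrt (q t)) x (- l / 2 * (/ sqrt (q x) * (/ sqrt (q x) * / sqrt (q x)))).
Proof.
  intros Hq Hp.
  assert (Hs : 0 < sqrt (q x)) by (apply sqrt_lt_R0; auto).
  assert (Hc : derivable_pt_lim (fun t => sqrt (q t)) x (/ (2 * sqrt (q x)) * l)).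
  { apply (derivable_pt_lim_comp q sqrt); auto. apply derivable_pt_lim_sqrt; auto. }
  apply dext with (g := fun t => 1 / sqrt (q t)). { intros; unfold Rdiv; ring. }
  eapply dval. apply ddiv. apply dconst. exact Hc. lra. cbv beta.
  field. lra.
Qed.

Lemma deriv_at_eq f x l : derivable_pt_lim f x l -> deriv_at f x = l.
Proof.
  intros H. unfold deriv_at.
  apply (uniqueness_limite f x). 2: exact H.
  apply (epsilon_spec (inhabits 0) (fun l => derivable_pt_lim f x l)). eauto.
Qed.

Lemma dsq f x l : derivable_pt_lim f x l -> derivable_pt_lim (fun t => f t ^ 2) x (2 * f x * l).
Proof. intros H. apply dext with (g := fun t => f t * f t). intros; ring.
  eapply dval. apply dmult; eauto. ring. Qed.

Definition muQ : Q := 59729 # 19885499729.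
Lemma muQ_eq : Q2R muQ = mu_ES.
Proof. unfold mu_ES, Q2R, Rdiv; simpl. reflexivity. Qed.

Inductive ex := Cst (q : Q) | Var (i : nat) | S1 | S2 | Add (a b : ex) | Mul (a b : ex).

Fixpoint evA (x0 x1 x2 x3 s1 s2 : R) (e : ex) : R :=
  match e with
  | Cst q => Q2R q
  | Var i => match i with 0%nat => x0 | 1%nat => x1 | 2%nat => x2 | 3%nat => x3 | _ => 0 end
  | S1 => s1
  | S2 => s2
  | Add a b => evA x0 x1 x2 x3 s1 s2 a + evA x0 x1 x2 x3 s1 s2 b
  | Mul a b => evA x0 x1 x2 x3 s1 s2 a * evA x0 x1 x2 x3 s1 s2 b
  end.

Definition s1f (x0 x2 : R) := / sqrt ((x0 + mu_ES) ^ 2 + x2 ^ 2).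
Definition s2f (x0 x2 : R) := / sqrt ((x0 + mu_ES - 1) ^ 2 + x2 ^ 2).

Definition ev (e : ex) (x0 x1 x2 x3 : R) : R := evA x0 x1 x2 x3 (s1f x0 x2) (s2f x0 x2) e.

Definition cube (e : ex) := Mul e (Mul e e).

Fixpoint D (k : nat) (e : ex) : ex :=
  match e with
  | Cst _ => Cst 0
  | Var i => Cst (if Nat.eqb i k then 1 else 0)
  | S1 => match k with
          | 0%nat => Mul (Cst (-1)) (Mul (Add (Var 0) (Cst muQ)) (cube S1))
          | 2%nat => Mul (Cst (-1)) (Mul (Var 2) (cube S1))
          | _ => Cst 0 end
  | S2 => match k with
          | 0%nat => Mul (Cst (-1)) (Mul (Add (Var 0) (Cst (muQ - 1))) (cube S2))
          | 2%nat => Mul (Cst (-1)) (Mul (Var 2) (cube S2))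
          | _ => Cst 0 end
  | Add a b => Add (D k a) (D k b)
  | Mul a b => Add (Mul (D k a) b) (Mul a (D k b))
  end.

Definition Pc (x0 : R) := 0 < x0 + mu_ES < 1.

Lemma Q2R_m1 : Q2R (-1) = -1. Proof. unfold Q2R; simpl; field. Qed.
Lemma Q2R_1 : Q2R 1 = 1. Proof. unfold Q2R; simpl; field. Qed.
Lemma Q2R_0 : Q2R 0 = 0. Proof. unfold Q2R; simpl; field. Qed.
Lemma Q2R_mum1 : Q2R (muQ - 1) = mu_ES - 1.
Proof. rewrite Q2R_minus, muQ_eq, Q2R_1; ring. Qed.

Lemma mu_pos : 0 < mu_ES. Proof. unfold mu_ES; lra. Qed.

Lemma q1pos x0 x2 : Pc x0 -> 0 < (x0 + mu_ES) ^ 2 + x2 ^ 2.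
Proof. unfold Pc; intros; nra. Qed.
Lemma q2pos x0 x2 : Pc x0 -> 0 < (x0 + mu_ES - 1) ^ 2 + x2 ^ 2.
Proof. unfold Pc; intros; nra. Qed.

Ltac dsimpl := rewrite ?Q2R_m1, ?Q2R_1, ?Q2R_0, ?Q2R_mum1, ?muQ_eq.

Lemma sound0 e x0 x1 x2 x3 : Pc x0 ->
  derivable_pt_lim (fun t => ev e t x1 x2 x3) x0 (ev (D 0 e) x0 x1 x2 x3).
Proof.
  intros HP. unfold ev. induction e; simpl; dsimpl.
  - apply dconst.
  - destruct i as [|[|[|[|i]]]]; simpl; dsimpl; first [apply did | apply dconst].
  - eapply dval. apply (dinvsqrt (fun t => (t + mu_ES) ^ 2 + x2 ^ 2)).
    + eapply dval. apply dplus. apply (dsq (fun t => t + mu_ES)).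
      apply dplus. apply did. apply dconst. apply dconst. reflexivity.
    + apply q1pos; auto.
    + unfold s1f; dsimpl; cbv beta. field. apply Rgt_not_eq, sqrt_lt_R0, q1pos; auto.
  - eapply dval. apply (dinvsqrt (fun t => (t + mu_ES - 1) ^ 2 + x2 ^ 2)).
    + eapply dval. apply dplus. apply (dsq (fun t => t + mu_ES - 1)).
      apply dplus. apply dplus. apply did. apply dconst. apply dconst. apply dconst. reflexivity.
    + apply q2pos; auto.
    + unfold s2f; dsimpl; cbv beta. field. apply Rgt_not_eq, sqrt_lt_R0, q2pos; auto.
  - apply dplus; auto.
  - apply dmult; auto.
Qed.

Lemma sound2 e x0 x1 x2 x3 : Pc x0 ->
  derivable_pt_lim (fun t => ev e x0 x1 t x3) x2 (ev (D 2 e) x0 x1 x2 x3).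
Proof.
  intros HP. unfold ev. induction e; simpl; dsimpl.
  - apply dconst.
  - destruct i as [|[|[|[|i]]]]; simpl; dsimpl; first [apply did | apply dconst].
  - eapply dval. apply (dinvsqrt (fun t => (x0 + mu_ES) ^ 2 + t ^ 2)).
    + eapply dval. apply dplus. apply dconst. apply (dsq (fun t => t)). apply did. reflexivity.
    + apply q1pos; auto.
    + unfold s1f; dsimpl; cbv beta. field. apply Rgt_not_eq, sqrt_lt_R0, q1pos; auto.
  - eapply dval. apply (dinvsqrt (fun t => (x0 + mu_ES - 1) ^ 2 + t ^ 2)).
    + eapply dval. apply dplus. apply dconst. apply (dsq (fun t => t)). apply did. reflexivity.
    + apply q2pos; auto.
    + unfold s2f; dsimpl; cbv beta. field. apply Rgt_not_eq, sqrt_lt_R0, q2pos; auto.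
  - apply dplus; auto.
  - apply dmult; auto.
Qed.

Lemma sound1 e x0 x1 x2 x3 :
  derivable_pt_lim (fun t => ev e x0 t x2 x3) x1 (ev (D 1 e) x0 x1 x2 x3).
Proof.
  unfold ev. induction e; simpl; dsimpl.
  - apply dconst.
  - destruct i as [|[|[|[|i]]]]; simpl; dsimpl; first [apply did | apply dconst].
  - apply dconst.
  - apply dconst.
  - apply dplus; auto.
  - apply dmult; auto.
Qed.

Lemma sound3 e x0 x1 x2 x3 :
  derivable_pt_lim (fun t => ev e x0 x1 x2 t) x3 (ev (D 3 e) x0 x1 x2 x3).
Proof.
  unfold ev. induction e; simpl; dsimpl.
  - apply dconst.
  - destruct i as [|[|[|[|i]]]]; simpl; dsimpl; first [apply did | apply dconst].
  - apply dconst.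
  - apply dconst.
  - apply dplus; auto.
  - apply dmult; auto.
Qed.

Lemma Dp_ev e k x0 x1 x2 x3 : (k <= 3)%nat -> Pc x0 ->
  Dp k (ev e) x0 x1 x2 x3 = ev (D k e) x0 x1 x2 x3.
Proof.
  intros Hk HP. destruct k as [|[|[|[|k]]]]; simpl; apply deriv_at_eq.
  - apply sound0; auto.
  - apply sound1.
  - apply sound2; auto.
  - apply sound3.
  - lia.
Qed.

Lemma Pc_nbhd x0 : Pc x0 -> exists d, 0 < d /\ forall t, Rabs (t - x0) < d -> Pc t.
Proof.
  unfold Pc; intros H. exists (Rmin (x0 + mu_ES) (1 - (x0 + mu_ES))).
  split. apply Rmin_pos; lra.
  intros t Ht. pose proof (Rmin_l (x0 + mu_ES) (1 - (x0 + mu_ES))).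
  pose proof (Rmin_r (x0 + mu_ES) (1 - (x0 + mu_ES))).
  apply Rabs_def2 in Ht. lra.
Qed.

Lemma Dp_local (f : fun4) e k x0 x1 x2 x3 : (k <= 3)%nat -> Pc x0 ->
  (forall a b c d, Pc a -> f a b c d = ev e a b c d) ->
  Dp k f x0 x1 x2 x3 = ev (D k e) x0 x1 x2 x3.
Proof.
  intros Hk HP Hf. destruct k as [|[|[|[|k]]]]; simpl; apply deriv_at_eq.
  - apply dlocal with (g := fun t => ev e t x1 x2 x3).
    + destruct (Pc_nbhd x0 HP) as [d [Hd Hn]]. exists d; split; auto.
    + apply sound0; auto.
  - apply dext with (g := fun t => ev e x0 t x2 x3). intros; auto. apply sound1.
  - apply dext with (g := fun t => ev e x0 x1 t x3). intros; auto. apply sound2; auto.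
  - apply dext with (g := fun t => ev e x0 x1 x2 t). intros; auto. apply sound3.
  - lia.
Qed.

Lemma Dsym e i j x0 x1 x2 x3 s1 s2 :
  evA x0 x1 x2 x3 s1 s2 (D i (D j e)) = evA x0 x1 x2 x3 s1 s2 (D j (D i e)).
Proof.
  induction e; simpl.
  - reflexivity.
  - reflexivity.
  - destruct i as [|[|[|i]]]; destruct j as [|[|[|j]]]; simpl; dsimpl; ring.
  - destruct i as [|[|[|i]]]; destruct j as [|[|[|j]]]; simpl; dsimpl; ring.
  - rewrite IHe1, IHe2; ring.
  - rewrite IHe1, IHe2; ring.
Qed.

Definition kQ : Q := 331781608778473400 # 33612965254906458659549787.

Lemma kQ_eq : Q2R kQ = 1 / c_ES ^ 2.
Proof.
  unfold kQ, c_ES, Q2R.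
  rewrite Rpow_mult_distr, pow2_sqrt by lra. simpl. field.
Qed.

Definition nQ : Q := 1 - (3#2) * kQ * (1 - (1#3) * muQ * (1 - muQ)).

Lemma nQ_eq : Q2R nQ = nfac mu_ES c_ES.
Proof.
  unfold nQ, nfac. rewrite Q2R_minus, !Q2R_mult, Q2R_minus, !Q2R_mult, Q2R_minus, kQ_eq, muQ_eq.
  unfold Q2R; simpl. field.
  apply Rgt_not_eq, Rmult_lt_0_compat; [lra| apply sqrt_lt_R0; lra].
Qed.

Local Open Scope Q_scope.
Definition xi := Var 0. Definition ud := Var 1. Definition eta := Var 2. Definition vd := Var 3.
Definition neg (a : ex) := Mul (Cst (-1)) a.
Definition r2e := Add (Mul xi xi) (Mul eta eta).
Definition w0e := Add (Mul (Cst (1#2)) r2e) (Add (Mul (Cst (1 - muQ)) S1) (Mul (Cst muQ) S2)).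
Definition Ve := Add (Add (Mul ud ud) (Mul vd vd)) (Add (Mul (Cst 2) (Add (Mul xi vd) (neg (Mul ud eta)))) r2e).
Definition Ue := Add (Mul (Cst (1 - muQ)) S1) (Mul (Cst muQ) S2).
Definition w1e :=
  Add (Mul (Cst (-(3#2) * (1 - (1#3) * muQ * (1 - muQ)))) r2e)
 (Add (Mul (Cst (1#8)) (Mul Ve Ve))
 (Add (Mul (Cst (3#2)) (Mul Ue Ve))
 (Add (Mul (Cst (-(1#2))) (Add (Mul (Cst ((1 - muQ) * (1 - muQ))) (Mul S1 S1)) (Mul (Cst (muQ * muQ)) (Mul S2 S2))))
      (Mul (Cst (muQ * (1 - muQ)))
        (Add (Mul (Add (Mul (Cst 4) vd) (Mul (Cst (7#2)) xi)) (Add S1 (neg S2)))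
        (Add (Mul (Cst (-(1#2))) (Mul (Mul eta eta) (Add (Mul (Cst muQ) (cube S1)) (Mul (Cst (1 - muQ)) (cube S2)))))
        (Add (Mul (Cst ((3 * muQ - 2) / 2)) S1)
        (Add (neg (Mul S1 S2))
             (Mul (Cst ((1 - 3 * muQ) / 2)) S2))))))))).
Definition EW := Add w0e (Mul (Cst kQ) w1e).
Local Close Scope Q_scope.

Lemma rho_sq x y : rho x y ^ 2 = x ^ 2 + y ^ 2.
Proof. unfold rho. rewrite pow2_sqrt; nra. Qed.

Lemma EW_eq a b c d : Pc a -> wfun mu_ES c_ES a b c d = ev EW a b c d.
Proof.
  intros HP.
  assert (H1 : sqrt ((a + mu_ES) ^ 2 + c ^ 2) <> 0) by (apply Rgt_not_eq, sqrt_lt_R0, q1pos; auto).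
  assert (H2 : sqrt ((a + mu_ES - 1) ^ 2 + c ^ 2) <> 0) by (apply Rgt_not_eq, sqrt_lt_R0, q2pos; auto).
  unfold wfun, w0, w1, Vf, ev, EW. rewrite !rho_sq.
  unfold rho1, rho2, s1f, s2f. rewrite <- kQ_eq.
  simpl.
  rewrite ?Q2R_minus, ?Q2R_mult, ?Q2R_opp, ?Q2R_div, ?Q2R_plus, ?muQ_eq.
  unfold Q2R; simpl. unfold mu_ES in *. field. split; auto. all: intro Hq; vm_compute in Hq; discriminate.
Qed.

Lemma quartic (D4 c2 c0 x y : R) : 0 < D4 -> 0 < c2 -> 0 < c0 -> 4 * D4 * c0 < c2 * c2 ->
  let X := x * x - y * y in let Y := 2 * x * y in
  D4 * (X * X - Y * Y) + c2 * X + c0 = 0 -> D4 * (2 * X * Y) + c2 * Y = 0 -> x = 0.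
Proof.
  intros HD Hc2 Hc0 Hdisc X Y HR HI.
  assert (HY : Y * (2 * D4 * X + c2) = 0) by (rewrite <- HI; ring).
  apply Rmult_integral in HY. destruct HY as [HY | HY].
  - assert (HX : X < 0).
    { destruct (Rlt_or_le X 0) as [h|h]; auto. rewrite HY in HR. nra. }
    unfold Y in HY. unfold X in HX.
    assert (Hxy : x * y = 0) by lra.
    apply Rmult_integral in Hxy. destruct Hxy as [h|h]; auto. subst y. nra.
  - exfalso.
    assert (HR' : 4*D4*(D4 * (X * X - Y * Y) + c2 * X + c0) = 0) by (rewrite HR; ring).
    assert (E : 4*D4*D4*(Y*Y) = (2*D4*X)*(2*D4*X) + 2*c2*(2*D4*X) + 4*D4*c0) by nra.
    assert (HT : 2*D4*X = - c2) by lra.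
    rewrite HT in E.
    assert (0 <= 4*D4*D4*(Y*Y)) by (apply Rmult_le_pos; nra).
    nra.
Qed.

Lemma eig_alg (A B D a b d g : R) (J : nat -> nat -> R) (l : Cpx) :
  let De := A * D - B * B in
  J 0%nat 0%nat = 0 -> J 0%nat 1%nat = 1 -> J 0%nat 2%nat = 0 -> J 0%nat 3%nat = 0 ->
  J 2%nat 0%nat = 0 -> J 2%nat 1%nat = 0 -> J 2%nat 2%nat = 0 -> J 2%nat 3%nat = 1 ->
  J 1%nat 0%nat = (D * a - B * b) / De -> J 1%nat 1%nat = B * g / De ->
  J 1%nat 2%nat = (D * b - B * d) / De -> J 1%nat 3%nat = D * g / De ->
  J 3%nat 0%nat = (A * b - B * a) / De -> J 3%nat 1%nat = - (A * g) / De ->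
  J 3%nat 2%nat = (A * d - B * b) / De -> J 3%nat 3%nat = - (B * g) / De ->
  0 < De -> 0 < g * g - A * d - D * a + 2 * B * b -> 0 < a * d - b * b ->
  4 * De * (a * d - b * b) < (g * g - A * d - D * a + 2 * B * b) * (g * g - A * d - D * a + 2 * B * b) ->
  is_eigenvalue 4 J l -> Re l = 0.
Proof.
  intros De H00 H01 H02 H03 H20 H21 H22 H23 H10 H11 H12 H13 H30 H31 H32 H33 HDe Hc2 Hc0 Hdisc Hev.
  unfold is_eigenvalue in Hev.
  assert (HR := f_equal Re Hev). assert (HI := f_equal Im Hev).
  destruct l as [x y]. simpl in HR, HI |- *.
  rewrite H00, H01, H02, H03, H20, H21, H22, H23, H10, H11, H12, H13, H30, H31, H32, H33 in HR, HI.
  apply (quartic De (g * g - A * d - D * a + 2 * B * b) (a * d - b * b) x y); auto.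
  - apply (Rmult_eq_reg_r (/ De)). 2: apply Rinv_neq_0_compat; lra.
    rewrite Rmult_0_l. rewrite <- HR. unfold De in *. field. lra.
  - apply (Rmult_eq_reg_r (/ De)). 2: apply Rinv_neq_0_compat; lra.
    rewrite Rmult_0_l. rewrite <- HI. unfold De in *. field. lra.
Qed.

Local Open Scope Q_scope.
Definition E1e e := Add (Mul (Cst (2 * nQ)) vd) (Add (D 0 e) (Add (neg (Mul (D 0 (D 1 e)) ud)) (neg (Mul (D 2 (D 1 e)) vd)))).
Definition E2e e := Add (Mul (Cst (-2 * nQ)) ud) (Add (D 2 e) (Add (neg (Mul (D 0 (D 3 e)) ud)) (neg (Mul (D 2 (D 3 e)) vd)))).
Definition Ae e := Add (Cst 1) (D 1 (D 1 e)).
Definition Be e := D 3 (D 1 e).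
Definition Ce e := D 1 (D 3 e).
Definition Dde e := Add (Cst 1) (D 3 (D 3 e)).
Definition Nx e := Add (Mul (E1e e) (Dde e)) (neg (Mul (Be e) (E2e e))).
Definition Ny e := Add (Mul (Ae e) (E2e e)) (neg (Mul (Ce e) (E1e e))).
Definition Den e := Add (Mul (Ae e) (Dde e)) (neg (Mul (Be e) (Ce e))).
Local Close Scope Q_scope.

Definition Wok (e : ex) := forall a b c d, Pc a -> wfun mu_ES c_ES a b c d = ev e a b c d.

Lemma DW1 e (He : Wok e) k a b c d : (k <= 3)%nat -> Pc a ->
  Dp k (wfun mu_ES c_ES) a b c d = ev (D k e) a b c d.
Proof. intros; apply Dp_local; auto. Qed.

Lemma DW2 e (He : Wok e) j k a b c d : (j <= 3)%nat -> (k <= 3)%nat -> Pc a ->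
  Dp j (Dp k (wfun mu_ES c_ES)) a b c d = ev (D j (D k e)) a b c d.
Proof. intros; apply Dp_local; auto. intros; apply DW1; auto. Qed.

Ltac qsimpl := rewrite ?Q2R_mult, ?Q2R_opp, ?nQ_eq, ?Q2R_m1, ?Q2R_1, ?Q2R_0;
  try (replace (Q2R 2) with 2 by (unfold Q2R; simpl; field));
  try (replace (Q2R (-2)) with (-2) by (unfold Q2R; simpl; field)).

Lemma xidd_eq e (He : Wok e) a b c d : Pc a ->
  xidd mu_ES c_ES a b c d = ev (Nx e) a b c d / ev (Den e) a b c d.
Proof.
  intros HP. cbv beta iota zeta delta [xidd acc_data].
  rewrite !(DW2 e He) by (auto; lia). rewrite !(DW1 e He) by (auto; lia).
  unfold ev, Nx, Den, E1e, E2e, Ae, Be, Ce, Dde, neg, xi, ud, eta, vd. simpl. qsimpl.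
  unfold Rdiv. f_equal; [ring | f_equal; ring].
Qed.

Lemma etadd_eq e (He : Wok e) a b c d : Pc a ->
  etadd mu_ES c_ES a b c d = ev (Ny e) a b c d / ev (Den e) a b c d.
Proof.
  intros HP. cbv beta iota zeta delta [etadd acc_data].
  rewrite !(DW2 e He) by (auto; lia). rewrite !(DW1 e He) by (auto; lia).
  unfold ev, Ny, Den, E1e, E2e, Ae, Be, Ce, Dde, neg, xi, ud, eta, vd. simpl. qsimpl.
  unfold Rdiv. f_equal; [ring | f_equal; ring].
Qed.

Lemma Dp_quot (f : fun4) N Dn k x0 x1 x2 x3 : (k <= 3)%nat -> Pc x0 ->
  (forall a b c d, Pc a -> f a b c d = ev N a b c d / ev Dn a b c d) ->
  ev Dn x0 x1 x2 x3 <> 0 ->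
  Dp k f x0 x1 x2 x3 =
   (ev (D k N) x0 x1 x2 x3 * ev Dn x0 x1 x2 x3 - ev (D k Dn) x0 x1 x2 x3 * ev N x0 x1 x2 x3)
     / (ev Dn x0 x1 x2 x3) ^ 2.
Proof.
  intros Hk HP Hf HD. destruct k as [|[|[|[|k]]]]; simpl; apply deriv_at_eq.
  - apply dlocal with (g := fun t => ev N t x1 x2 x3 / ev Dn t x1 x2 x3).
    + destruct (Pc_nbhd x0 HP) as [d [Hd Hn]]. exists d; split; auto.
    + apply (ddiv (fun t => ev N t x1 x2 x3) (fun t => ev Dn t x1 x2 x3)); auto; apply sound0; auto.
  - apply dext with (g := fun t => ev N x0 t x2 x3 / ev Dn x0 t x2 x3). intros; apply Hf; auto.
    apply (ddiv (fun t => ev N x0 t x2 x3) (fun t => ev Dn x0 t x2 x3)); auto; apply sound1.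
  - apply dext with (g := fun t => ev N x0 x1 t x3 / ev Dn x0 x1 t x3). intros; apply Hf; auto.
    apply (ddiv (fun t => ev N x0 x1 t x3) (fun t => ev Dn x0 x1 t x3)); auto; apply sound2; auto.
  - apply dext with (g := fun t => ev N x0 x1 x2 t / ev Dn x0 x1 x2 t). intros; apply Hf; auto.
    apply (ddiv (fun t => ev N x0 x1 x2 t) (fun t => ev Dn x0 x1 x2 t)); auto; apply sound3.
  - lia.
Qed.

Lemma Dp_quot0 (f : fun4) N Dn k x0 x1 x2 x3 : (k <= 3)%nat -> Pc x0 ->
  (forall a b c d, Pc a -> f a b c d = ev N a b c d / ev Dn a b c d) ->
  ev Dn x0 x1 x2 x3 <> 0 -> ev N x0 x1 x2 x3 = 0 ->
  Dp k f x0 x1 x2 x3 = ev (D k N) x0 x1 x2 x3 / ev Dn x0 x1 x2 x3.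
Proof.
  intros Hk HP Hf HD HN. rewrite (Dp_quot f N Dn); auto. rewrite HN. field. auto.
Qed.

Definition wv e i j x0 x2 := ev (D i (D j e)) x0 0 x2 0.

Lemma wv_sym e i j x0 x2 : wv e i j x0 x2 = wv e j i x0 x2.
Proof. unfold wv, ev. apply Dsym. Qed.

Lemma Nx_zero e x0 x2 : ev (D 0 e) x0 0 x2 0 = 0 -> ev (D 2 e) x0 0 x2 0 = 0 ->
  ev (Nx e) x0 0 x2 0 = 0 /\ ev (Ny e) x0 0 x2 0 = 0.
Proof.
  unfold ev; intros H0 H2. unfold Nx, Ny, E1e, E2e, Ae, Be, Ce, Dde, neg, xi, ud, eta, vd. simpl.
  rewrite H0, H2. split; ring.
Qed.

Definition Aval e x0 x2 := 1 + wv e 1 1 x0 x2.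
Definition Bval e x0 x2 := wv e 3 1 x0 x2.
Definition Dval e x0 x2 := 1 + wv e 3 3 x0 x2.
Definition gval e x0 x2 := 2 * Q2R nQ + wv e 3 0 x0 x2 - wv e 2 1 x0 x2.
Definition Delta e x0 x2 := Aval e x0 x2 * Dval e x0 x2 - Bval e x0 x2 * Bval e x0 x2.

Lemma Den_val e x0 x2 : ev (Den e) x0 0 x2 0 = Delta e x0 x2.
Proof.
  unfold Delta, Aval, Bval, Dval. rewrite (wv_sym e 3 1) at 2. unfold wv, ev, Den, Ae, Be, Ce, Dde, neg. simpl. qsimpl. ring.
Qed.


Lemma stab_gen e (He : Wok e) x0 x2 : Pc x0 ->
  ev (D 0 e) x0 0 x2 0 = 0 -> ev (D 2 e) x0 0 x2 0 = 0 ->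
  let A := Aval e x0 x2 in let B := Bval e x0 x2 in let Dd := Dval e x0 x2 in
  let a := wv e 0 0 x0 x2 in let b := wv e 2 0 x0 x2 in let d := wv e 2 2 x0 x2 in
  let g := gval e x0 x2 in
  0 < A * Dd - B * B -> 0 < g * g - A * d - Dd * a + 2 * B * b -> 0 < a * d - b * b ->
  4 * (A * Dd - B * B) * (a * d - b * b) < (g * g - A * d - Dd * a + 2 * B * b) * (g * g - A * d - Dd * a + 2 * B * b) ->
  forall l, is_eigenvalue 4 (jacobian mu_ES c_ES x0 x2) l -> Re l = 0.
Proof.
  intros HP H0 H2 A B Dd a b d g HDe Hc2 Hc0 Hdisc l Hl.
  assert (HDen : ev (Den e) x0 0 x2 0 <> 0) by (rewrite Den_val; unfold Delta; fold A B Dd; lra).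
  destruct (Nx_zero e x0 x2 H0 H2) as [HNx HNy].
  unfold ev in H0, H2.
  assert (HX : forall j, (j <= 3)%nat -> jacobian mu_ES c_ES x0 x2 1 j = ev (D j (Nx e)) x0 0 x2 0 / ev (Den e) x0 0 x2 0).
  { intros j Hj. unfold jacobian. change (field mu_ES c_ES 1) with (xidd mu_ES c_ES).
    apply Dp_quot0; auto. intros; apply xidd_eq; auto. }
  assert (HY : forall j, (j <= 3)%nat -> jacobian mu_ES c_ES x0 x2 3 j = ev (D j (Ny e)) x0 0 x2 0 / ev (Den e) x0 0 x2 0).
  { intros j Hj. unfold jacobian. change (field mu_ES c_ES 3) with (etadd mu_ES c_ES).
    apply Dp_quot0; auto. intros; apply etadd_eq; auto. }
  rewrite Den_val in HX, HY.
  apply (eig_alg A B Dd a b d g (jacobian mu_ES c_ES x0 x2) l); auto.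
  all: try (unfold jacobian; simpl; apply deriv_at_eq; first [apply dconst | apply did]; fail).
  all: try (rewrite HX by lia) ; try (rewrite HY by lia).
  all: unfold Delta; fold A B Dd.
  all: unfold A, B, Dd, a, b, d, g, Aval, Bval, Dval, gval, wv, ev, Nx, Ny, E1e, E2e, Ae, Be, Ce, Dde, neg, xi, ud, eta, vd;
       simpl; qsimpl; rewrite ?H0, ?H2.
  all: rewrite ?(Dsym e 0 2), ?(Dsym e 1 3), ?(Dsym e 0 1), ?(Dsym e 1 2), ?(Dsym e 0 3), ?(Dsym e 2 3).
  all: unfold Rdiv; f_equal; ring.
Qed.

Definition SP : positive := 1208925819614629174706176%positive. (* 2^80 *)
Definition SZ : Z := Zpos SP.
Lemma SZ_pos : (0 < SZ)%Z. Proof. reflexivity. Qed.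
Lemma SR_pos : 0 < IZR SZ. Proof. apply IZR_lt. reflexivity. Qed.
Definition fx (z : Z) : R := IZR z / IZR SZ.

Definition zdn (m : Z) : Z := (m / SZ)%Z.
Definition zup (m : Z) : Z := (- ((- m) / SZ))%Z.

Lemma zdn_le m : IZR (zdn m) * IZR SZ <= IZR m.
Proof. unfold zdn. rewrite <- mult_IZR. apply IZR_le. rewrite Z.mul_comm. apply Z.mul_div_le. reflexivity. Qed.
Lemma zup_ge m : IZR m <= IZR (zup m) * IZR SZ.
Proof. unfold zup. rewrite <- mult_IZR. apply IZR_le.
  pose proof (Z.mul_div_le (- m) SZ SZ_pos). lia. Qed.

Definition iv := (Z * Z)%type.
Definition inI (u : iv) (x : R) := fx (fst u) <= x <= fx (snd u).

Definition iadd (u v : iv) : iv := let '(a, b) := u in let '(c, d) := v in ((a + c)%Z, (b + d)%Z).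
Definition imul (u v : iv) : iv :=
  let '(a, b) := u in let '(c, d) := v in
  let p1 := (a * c)%Z in let p2 := (a * d)%Z in let p3 := (b * c)%Z in let p4 := (b * d)%Z in
  (zdn (Z.min (Z.min p1 p2) (Z.min p3 p4)), zup (Z.max (Z.max p1 p2) (Z.max p3 p4))).

Lemma mul_lo A B C D x y m : A <= x <= B -> C <= y <= D ->
  m <= A * C -> m <= A * D -> m <= B * C -> m <= B * D -> m <= x * y.
Proof.
  intros Hx Hy H1 H2 H3 H4.
  destruct (Rle_dec 0 y).
  - assert (A * y <= x * y) by nra. destruct (Rle_dec 0 A); nra.
  - assert (B * y <= x * y) by nra. destruct (Rle_dec 0 B); nra.
Qed.

Lemma mul_hi A B C D x y m : A <= x <= B -> C <= y <= D ->
  A * C <= m -> A * D <= m -> B * C <= m -> B * D <= m -> x * y <= m.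
Proof.
  intros Hx Hy H1 H2 H3 H4.
  destruct (Rle_dec 0 y).
  - assert (x * y <= B * y) by nra. destruct (Rle_dec 0 B); nra.
  - assert (x * y <= A * y) by nra. destruct (Rle_dec 0 A); nra.
Qed.

Lemma iadd_ok u v x y : inI u x -> inI v y -> inI (iadd u v) (x + y).
Proof.
  destruct u as [a b], v as [c d]; unfold inI, fx; simpl; intros Hx Hy.
  rewrite !plus_IZR. unfold Rdiv in *. lra.
Qed.

Lemma fx_mul_lo m p : (m <= p)%Z -> fx (zdn m) <= fx p * / IZR SZ.
Proof.
  intros H. unfold fx. pose proof (zdn_le m). pose proof SR_pos.
  apply IZR_le in H.
  apply Rmult_le_reg_r with (IZR SZ * IZR SZ). nra.
  unfold Rdiv. field_simplify; try lra.
Qed.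

Lemma fx_mul_hi m p : (p <= m)%Z -> fx p * / IZR SZ <= fx (zup m).
Proof.
  intros H. unfold fx. pose proof (zup_ge m). pose proof SR_pos.
  apply IZR_le in H.
  apply Rmult_le_reg_r with (IZR SZ * IZR SZ). nra.
  unfold Rdiv. field_simplify; try lra.
Qed.

Lemma fx_prod a c : fx a * fx c = fx (a * c) * / IZR SZ.
Proof. unfold fx. rewrite mult_IZR. pose proof SR_pos. field. lra. Qed.

Lemma imul_ok u v x y : inI u x -> inI v y -> inI (imul u v) (x * y).
Proof.
  destruct u as [a b], v as [c d]; unfold inI; simpl; intros Hx Hy. split.
  - apply (mul_lo (fx a) (fx b) (fx c) (fx d)); auto; rewrite fx_prod; apply fx_mul_lo; lia.
  - apply (mul_hi (fx a) (fx b) (fx c) (fx d)); auto; rewrite fx_prod; apply fx_mul_hi; lia.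
Qed.

Definition qlo (q : Q) : Z := Qfloor (q * (SZ # 1)).
Definition qhi (q : Q) : Z := Qceiling (q * (SZ # 1)).
Lemma Q2R_injZ z : Q2R (inject_Z z) = IZR z.
Proof. unfold Q2R, inject_Z. simpl. field. Qed.
Lemma Q2R_S : Q2R (SZ # 1) = IZR SZ.
Proof. unfold Q2R. simpl. field. Qed.

Lemma qlo_ok q : fx (qlo q) <= Q2R q.
Proof.
  unfold fx, qlo. pose proof (Qle_Rle _ _ (Qfloor_le (q * (SZ # 1)))) as H.
  remember (Qfloor (q * (SZ # 1))) as z.
  rewrite Q2R_mult, Q2R_injZ, Q2R_S in H. pose proof SR_pos.
  apply Rmult_le_reg_r with (IZR SZ); auto. unfold Rdiv. rewrite Rmult_assoc, Rinv_l by lra. lra.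
Qed.
Lemma qhi_ok q : Q2R q <= fx (qhi q).
Proof.
  unfold fx, qhi. pose proof (Qle_Rle _ _ (Qle_ceiling (q * (SZ # 1)))) as H.
  remember (Qceiling (q * (SZ # 1))) as z.
  rewrite Q2R_mult, Q2R_injZ, Q2R_S in H. pose proof SR_pos.
  apply Rmult_le_reg_r with (IZR SZ); auto. unfold Rdiv. rewrite Rmult_assoc, Rinv_l by lra. lra.
Qed.

Record box := mkbox { bx0 : iv; bx2 : iv; bs1 : iv; bs2 : iv }.

(* evaluation at zero velocities *)
Fixpoint iev (b : box) (e : ex) : iv :=
  match e with
  | Cst q => (qlo q, qhi q)
  | Var i => match i with 0%nat => bx0 b | 2%nat => bx2 b | _ => (0%Z, 0%Z) end
  | S1 => bs1 b
  | S2 => bs2 b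
  | Add e1 e2 => iadd (iev b e1) (iev b e2)
  | Mul e1 e2 => imul (iev b e1) (iev b e2)
  end.

Lemma iev_ok b e x0 x2 s1 s2 :
  inI (bx0 b) x0 -> inI (bx2 b) x2 -> inI (bs1 b) s1 -> inI (bs2 b) s2 ->
  inI (iev b e) (evA x0 0 x2 0 s1 s2 e).
Proof.
  intros H0 H2 H4 H5. induction e; simpl.
  - split; [apply qlo_ok | apply qhi_ok].
  - destruct i as [|[|[|[|i]]]]; auto; unfold inI, fx; simpl; unfold Rdiv; rewrite Rmult_0_l; lra.
  - auto.
  - auto.
  - apply iadd_ok; auto.
  - apply imul_ok; auto.
Qed.

Definition isz (e : ex) : bool := match e with Cst q => Qeq_bool q 0 | _ => false end.
Definition is1 (e : ex) : bool := match e with Cst q => Qeq_bool q 1 | _ => false end.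

Definition mkadd (a b : ex) : ex := if isz a then b else if isz b then a else Add a b.
Definition mkmul (a b : ex) : ex := if isz a || isz b then Cst 0 else if is1 a then b else if is1 b then a else Mul a b.

Fixpoint simp (e : ex) : ex :=
  match e with
  | Var i => match i with 1%nat | 3%nat => Cst 0 | _ => e end
  | Add a b => mkadd (simp a) (simp b)
  | Mul a b => mkmul (simp a) (simp b)
  | _ => e
  end.

Lemma isz_ok e x0 x2 s1 s2 : isz e = true -> evA x0 0 x2 0 s1 s2 e = 0.
Proof. destruct e; simpl; try discriminate. intros H. apply Qeq_bool_iff, Qeq_eqR in H. rewrite H. apply Q2R_0. Qed.
Lemma is1_ok e x0 x2 s1 s2 : is1 e = true -> evA x0 0 x2 0 s1 s2 e = 1.
Proof. destruct e; simpl; try discriminate. intros H. apply Qeq_bool_iff, Qeq_eqR in H. rewrite H. apply Q2R_1. Qed.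

Lemma mkadd_ok a b x0 x2 s1 s2 : evA x0 0 x2 0 s1 s2 (mkadd a b) = evA x0 0 x2 0 s1 s2 a + evA x0 0 x2 0 s1 s2 b.
Proof.
  unfold mkadd. destruct (isz a) eqn:Ea.
  - rewrite (isz_ok a x0 x2 s1 s2 Ea). ring.
  - destruct (isz b) eqn:Eb.
    + rewrite (isz_ok b x0 x2 s1 s2 Eb). ring.
    + reflexivity.
Qed.
Lemma mkmul_ok a b x0 x2 s1 s2 : evA x0 0 x2 0 s1 s2 (mkmul a b) = evA x0 0 x2 0 s1 s2 a * evA x0 0 x2 0 s1 s2 b.
Proof.
  unfold mkmul. destruct (isz a) eqn:Ea.
  - rewrite (isz_ok a x0 x2 s1 s2 Ea). simpl. rewrite Q2R_0. ring.
  - destruct (isz b) eqn:Eb.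
    + rewrite (isz_ok b x0 x2 s1 s2 Eb). simpl. rewrite Q2R_0. ring.
    + simpl. destruct (is1 a) eqn:Fa.
      * rewrite (is1_ok a x0 x2 s1 s2 Fa). ring.
      * destruct (is1 b) eqn:Fb.
        -- rewrite (is1_ok b x0 x2 s1 s2 Fb). ring.
        -- reflexivity.
Qed.

Lemma simp_ok e x0 x2 s1 s2 : evA x0 0 x2 0 s1 s2 (simp e) = evA x0 0 x2 0 s1 s2 e.
Proof.
  induction e.
  - reflexivity.
  - destruct i as [|[|[|[|i]]]]; simpl; auto; apply Q2R_0.
  - reflexivity.
  - reflexivity.
  - cbn [simp]. rewrite mkadd_ok, IHe1, IHe2. reflexivity.
  - cbn [simp]. rewrite mkmul_ok, IHe1, IHe2. reflexivity.
Qed.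

Local Open Scope Q_scope.
Definition PP : Q := (SZ # 1) * (SZ # 1).
Definition isq_lo (qh : Q) : Z := Z.sqrt (Qfloor (PP / qh)).
Definition isq_hi (ql : Q) : Z := (Z.sqrt (Qceiling (PP / ql)) + 1)%Z.
Definition sqok (ql qh lo hi : Q) : bool :=
  negb (Qle_bool ql 0) && Qle_bool 0 lo && Qle_bool (lo * lo * qh) 1 && Qle_bool 0 hi && Qle_bool 1 (hi * hi * ql).
Definition q1l xl yl := (xl + muQ) * (xl + muQ) + yl * yl.
Definition q1h xu yu := (xu + muQ) * (xu + muQ) + yu * yu.
Definition q2l xu yl := (xu + muQ - 1) * (xu + muQ - 1) + yl * yl.
Definition q2h xl yu := (xl + muQ - 1) * (xl + muQ - 1) + yu * yu.
Definition rbox (xl xu yl yu : Q) : box :=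
  mkbox (qlo xl, qhi xu) (qlo yl, qhi yu)
    (isq_lo (q1h xu yu), isq_hi (q1l xl yl)) (isq_lo (q2h xl yu), isq_hi (q2l xu yl)).
Definition boxok (xl xu yl yu : Q) : bool :=
  Qle_bool 0 (xl + muQ) && Qle_bool (xu + muQ) 1 && Qle_bool 0 yl && Qle_bool xl xu && Qle_bool yl yu &&
  sqok (q1l xl yl) (q1h xu yu) (isq_lo (q1h xu yu) # SP) (isq_hi (q1l xl yl) # SP) &&
  sqok (q2l xu yl) (q2h xl yu) (isq_lo (q2h xl yu) # SP) (isq_hi (q2l xu yl) # SP).
Definition chk (e : ex) (xl xu yl yu L U : Q) : bool :=
  boxok xl xu yl yu && (let r := iev (rbox xl xu yl yu) (simp e) in Qle_bool L (fst r # SP) && Qle_bool (snd r # SP) U).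
Local Close Scope Q_scope.

Lemma invsqrt_bounds q ql qh lo hi : 0 < ql -> ql <= q <= qh -> 0 <= lo -> lo * lo * qh <= 1 ->
  0 <= hi -> 1 <= hi * hi * ql -> lo <= / sqrt q <= hi.
Proof.
  intros Hql Hq Hlo Hlo2 Hhi Hhi2.
  assert (Hs : 0 < sqrt q) by (apply sqrt_lt_R0; lra).
  assert (Hss : sqrt q * sqrt q = q) by (apply sqrt_sqrt; lra).
  split.
  - assert (lo * sqrt q <= 1).
    { destruct (Rle_dec (lo * sqrt q) 1); auto. exfalso.
      assert (1 < (lo * sqrt q) * (lo * sqrt q)) by nra.
      assert (E : (lo * sqrt q) * (lo * sqrt q) = lo * lo * (sqrt q * sqrt q)) by ring. rewrite Hss in E.
      nra. }
    apply Rmult_le_reg_r with (sqrt q); auto. rewrite Rinv_l; lra.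
  - assert (1 <= hi * sqrt q).
    { destruct (Rle_dec 1 (hi * sqrt q)); auto. exfalso.
      assert ((hi * sqrt q) * (hi * sqrt q) < 1) by (assert (0 <= hi * sqrt q) by nra; nra).
      assert (E : (hi * sqrt q) * (hi * sqrt q) = hi * hi * (sqrt q * sqrt q)) by ring. rewrite Hss in E.
      nra. }
    apply Rmult_le_reg_r with (sqrt q); auto. rewrite Rinv_l; lra.
Qed.

Lemma sqok_ok ql qh lo hi q : sqok ql qh lo hi = true -> Q2R ql <= q <= Q2R qh ->
  Q2R lo <= / sqrt q <= Q2R hi.
Proof.
  unfold sqok. intros H Hq.
  repeat (apply andb_prop in H; destruct H as [H ?]).
  apply negb_true_iff in H.
  assert (Hql : 0 < Q2R ql).
  { rewrite <- Q2R_0. apply Qlt_Rlt. apply Qnot_le_lt. intro C. apply Qle_bool_iff in C. congruence. }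
  repeat match goal with Hb : Qle_bool _ _ = true |- _ => apply Qle_bool_iff, Qle_Rle in Hb end.
  rewrite !Q2R_mult, Q2R_0, Q2R_1 in *.
  apply invsqrt_bounds with (Q2R ql) (Q2R qh); auto.
Qed.

Lemma boxok_ok xl xu yl yu x y : boxok xl xu yl yu = true ->
  Q2R xl <= x <= Q2R xu -> Q2R yl <= y <= Q2R yu ->
  inI (bx0 (rbox xl xu yl yu)) x /\ inI (bx2 (rbox xl xu yl yu)) y /\
  inI (bs1 (rbox xl xu yl yu)) (s1f x y) /\ inI (bs2 (rbox xl xu yl yu)) (s2f x y).
Proof.
  unfold boxok. intros H Hx Hy.
  apply andb_prop in H; destruct H as [H Hs2].
  apply andb_prop in H; destruct H as [H Hs1].
  repeat (apply andb_prop in H; destruct H as [H ?]).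
  repeat match goal with Hb : Qle_bool _ _ = true |- _ => apply Qle_bool_iff, Qle_Rle in Hb end.
  rewrite ?Q2R_plus, ?Q2R_minus, ?Q2R_0, ?Q2R_1, ?muQ_eq in *.
  unfold inI, rbox, s1f, s2f; simpl.
  pose proof (qlo_ok xl). pose proof (qhi_ok xu). pose proof (qlo_ok yl). pose proof (qhi_ok yu).
  split; [lra|]. split; [lra|]. split.
  - apply (sqok_ok _ _ _ _ _ Hs1). unfold q1l, q1h. rewrite !Q2R_plus, !Q2R_mult, !Q2R_plus, muQ_eq.
    simpl. split; nra.
  - apply (sqok_ok _ _ _ _ _ Hs2). unfold q2l, q2h. rewrite !Q2R_plus, !Q2R_mult, !Q2R_minus, !Q2R_plus, muQ_eq, Q2R_1.
    simpl. split; nra.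
Qed.

Lemma chk_ok e xl xu yl yu L U x y : chk e xl xu yl yu L U = true ->
  Q2R xl <= x <= Q2R xu -> Q2R yl <= y <= Q2R yu ->
  Q2R L <= ev e x 0 y 0 <= Q2R U.
Proof.
  unfold chk. intros H Hx Hy. apply andb_prop in H. destruct H as [Hb H].
  apply andb_prop in H. destruct H as [HL HU].
  apply Qle_bool_iff, Qle_Rle in HL. apply Qle_bool_iff, Qle_Rle in HU.
  destruct (boxok_ok _ _ _ _ _ _ Hb Hx Hy) as [H0 [H2 [H1 H3]]].
  assert (Hi := iev_ok (rbox xl xu yl yu) (simp e) x y (s1f x y) (s2f x y) H0 H2 H1 H3).
  rewrite simp_ok in Hi. unfold inI, fx in Hi. unfold ev.
  change (Q2R (fst (iev (rbox xl xu yl yu) (simp e)) # SP)) with (IZR (fst (iev (rbox xl xu yl yu) (simp e))) / IZR SZ) in HL.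
  change (Q2R (snd (iev (rbox xl xu yl yu) (simp e)) # SP)) with (IZR (snd (iev (rbox xl xu yl yu) (simp e))) / IZR SZ) in HU.
  lra.
Qed.

Definition xlQ : Q := 312498095327 # 625000000000.
Definition xuQ : Q := 312498189077 # 625000000000.
Definition ylQ : Q := 43301267124383 # 50000000000000.
Definition yuQ : Q := 4330127145451 # 5000000000000.
Definition y1Q : Q := 86602539022268958037 # 100000000000000000000.
Definition y2Q : Q := 86602541022268958037 # 100000000000000000000.
Definition xa1Q : Q := 2499985099217976294747 # 5000000000000000000000.
Definition xb1Q : Q := 2499985099218076294747 # 5000000000000000000000.
Definition xa2Q : Q := 2499984926013938880669 # 5000000000000000000000.
Definition xb2Q : Q := 2499984926014038880669 # 5000000000000000000000.

Definition alQ : Q := 74999935 # 100000000.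
Definition ahQ : Q := 75000082 # 100000000.
Definition blQ : Q := 129902958 # 100000000.
Definition bhQ : Q := 129903109 # 100000000.
Definition dlQ : Q := 224999857 # 100000000.
Definition dhQ : Q := 225000117 # 100000000.
Definition smQ : Q := 1 # 10000000.

Lemma c_a : chk (D 0 (D 0 EW)) xlQ xuQ ylQ yuQ alQ ahQ = true. Proof. vm_compute. reflexivity. Qed.
Lemma c_b : chk (D 2 (D 0 EW)) xlQ xuQ ylQ yuQ blQ bhQ = true. Proof. vm_compute. reflexivity. Qed.
Lemma c_b' : chk (D 0 (D 2 EW)) xlQ xuQ ylQ yuQ blQ bhQ = true. Proof. vm_compute. reflexivity. Qed.
Lemma c_d : chk (D 2 (D 2 EW)) xlQ xuQ ylQ yuQ dlQ dhQ = true. Proof. vm_compute. reflexivity. Qed.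
Lemma c_11 : chk (D 1 (D 1 EW)) xlQ xuQ ylQ yuQ (-smQ) smQ = true. Proof. vm_compute. reflexivity. Qed.
Lemma c_31 : chk (D 3 (D 1 EW)) xlQ xuQ ylQ yuQ (-smQ) smQ = true. Proof. vm_compute. reflexivity. Qed.
Lemma c_33 : chk (D 3 (D 3 EW)) xlQ xuQ ylQ yuQ (-smQ) smQ = true. Proof. vm_compute. reflexivity. Qed.
Lemma c_30 : chk (D 3 (D 0 EW)) xlQ xuQ ylQ yuQ (-smQ) smQ = true. Proof. vm_compute. reflexivity. Qed.
Lemma c_21 : chk (D 2 (D 1 EW)) xlQ xuQ ylQ yuQ (-smQ) smQ = true. Proof. vm_compute. reflexivity. Qed.

Lemma c_e1 : chk (D 0 EW) xlQ xlQ y1Q y2Q (-1) (-(1 # 100000000)) = true. Proof. vm_compute. reflexivity. Qed.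
Lemma c_e2 : chk (D 0 EW) xuQ xuQ y1Q y2Q (6 # 100000000) 1 = true. Proof. vm_compute. reflexivity. Qed.
Lemma c_e3 : chk (D 0 EW) xa1Q xa1Q y1Q y1Q (-1) (-(7 # 1000000000000000)) = true. Proof. vm_compute. reflexivity. Qed.
Lemma c_e4 : chk (D 0 EW) xb1Q xb1Q y1Q y1Q (7 # 1000000000000000) 1 = true. Proof. vm_compute. reflexivity. Qed.
Lemma c_e5 : chk (D 2 EW) xa1Q xb1Q y1Q y1Q (-1) (-(2 # 10000000000000)) = true. Proof. vm_compute. reflexivity. Qed.
Lemma c_e6 : chk (D 0 EW) xa2Q xa2Q y2Q y2Q (-1) (-(7 # 1000000000000000)) = true. Proof. vm_compute. reflexivity. Qed.
Lemma c_e7 : chk (D 0 EW) xb2Q xb2Q y2Q y2Q (7 # 1000000000000000) 1 = true. Proof. vm_compute. reflexivity. Qed.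
Lemma c_e8 : chk (D 2 EW) xa2Q xb2Q y2Q y2Q (2 # 10000000000000) 1 = true. Proof. vm_compute. reflexivity. Qed.

Lemma nQ_bounds : 9999999 / 10000000 <= Q2R nQ <= 1.
Proof.
  assert (H1 : Qle_bool (9999999 # 10000000) nQ = true) by (vm_compute; reflexivity).
  assert (H2 : Qle_bool nQ 1 = true) by (vm_compute; reflexivity).
  apply Qle_bool_iff, Qle_Rle in H1. apply Qle_bool_iff, Qle_Rle in H2.
  rewrite Q2R_1 in H2. unfold Q2R at 1 in H1. simpl in H1. lra.
Qed.

Lemma num_stab a b d w11 w31 w33 w30 w21 n :
  74999935 / 100000000 <= a <= 75000082 / 100000000 ->
  129902958 / 100000000 <= b <= 129903109 / 100000000 ->
  224999857 / 100000000 <= d <= 225000117 / 100000000 ->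
  - (1/10000000) <= w11 <= 1/10000000 -> - (1/10000000) <= w31 <= 1/10000000 ->
  - (1/10000000) <= w33 <= 1/10000000 -> - (1/10000000) <= w30 <= 1/10000000 ->
  - (1/10000000) <= w21 <= 1/10000000 -> 9999999 / 10000000 <= n <= 1 ->
  let A := 1 + w11 in let B := w31 in let Dd := 1 + w33 in let g := 2 * n + w30 - w21 in
  0 < A * Dd - B * B /\ 0 < g * g - A * d - Dd * a + 2 * B * b /\ 0 < a * d - b * b /\
  4 * (A * Dd - B * B) * (a * d - b * b) < (g * g - A * d - Dd * a + 2 * B * b) * (g * g - A * d - Dd * a + 2 * B * b).
Proof.
  intros Ha Hb Hd H11 H31 H33 H30 H21 Hn A B Dd g.
  assert (HA : 9999999/10000000 <= A <= 10000001/10000000) by (unfold A; lra).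
  assert (HD : 9999999/10000000 <= Dd <= 10000001/10000000) by (unfold Dd; lra).
  assert (HB : -(1/10000000) <= B <= 1/10000000) by (unfold B; lra).
  assert (Hg : 19999996/10000000 <= g <= 20000002/10000000) by (unfold g; lra).
  clearbody A B Dd g.
  assert (HBB : B * B <= 1/100000000000000) by nra.
  assert (HDe1 : 99/100 <= A * Dd - B * B) by nra.
  assert (HDe2 : A * Dd - B * B <= 101/100) by nra.
  assert (Hgg : 39/10 <= g * g) by nra.
  assert (HAd : A * d <= 2251/1000) by nra.
  assert (HDa : Dd * a <= 751/1000) by nra.
  assert (HBb : -(1/1000) <= B * b) by nra.
  assert (Hc2 : 8/10 <= g * g - A * d - Dd * a + 2 * B * b) by lra.
  assert (Had : 74999935 / 100000000 * (224999857 / 100000000) <= a * d) by nra.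
  assert (Had2 : a * d <= 75000082 / 100000000 * (225000117 / 100000000)) by nra.
  assert (Hbb : b * b <= 129903109 / 100000000 * (129903109 / 100000000)) by nra.
  assert (Hbb2 : 129902958 / 100000000 * (129902958 / 100000000) <= b * b) by nra.
  assert (Hc0 : 0 < a * d - b * b) by lra.
  assert (Hc0' : a * d - b * b <= 1/1000) by lra.
  split; [lra|]. split; [lra|]. split; [lra|].
  assert (4 * (A * Dd - B * B) * (a * d - b * b) <= 4 * (101/100) * (1/1000)) by nra.
  nra.
Qed.

Lemma mu_val : mu_ES = 59729 / 19885499729. Proof. reflexivity. Qed.

Lemma rect_Q x y : in_rect x y -> Q2R xlQ <= x <= Q2R xuQ /\ Q2R ylQ <= y <= Q2R yuQ.
Proof. intros H; exact H. Qed.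

Lemma rect_Pc x y : in_rect x y -> Pc x.
Proof. unfold in_rect, Pc; rewrite mu_val; intros; lra. Qed.

Lemma stab_final x y : in_rect x y -> is_equilibrium mu_ES c_ES x y ->
  forall l, is_eigenvalue 4 (jacobian mu_ES c_ES x y) l -> Re l = 0.
Proof.
  intros Hr [He0 He2] l Hl.
  assert (HP := rect_Pc x y Hr). destruct (rect_Q x y Hr) as [Hx Hy].
  rewrite (DW1 EW EW_eq) in He0, He2 by (auto; lia).
  pose proof (chk_ok _ _ _ _ _ _ _ x y c_a Hx Hy) as Ha.
  pose proof (chk_ok _ _ _ _ _ _ _ x y c_b Hx Hy) as Hb.
  pose proof (chk_ok _ _ _ _ _ _ _ x y c_d Hx Hy) as Hd.
  pose proof (chk_ok _ _ _ _ _ _ _ x y c_11 Hx Hy) as H11.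
  pose proof (chk_ok _ _ _ _ _ _ _ x y c_31 Hx Hy) as H31.
  pose proof (chk_ok _ _ _ _ _ _ _ x y c_33 Hx Hy) as H33.
  pose proof (chk_ok _ _ _ _ _ _ _ x y c_30 Hx Hy) as H30.
  pose proof (chk_ok _ _ _ _ _ _ _ x y c_21 Hx Hy) as H21.
  rewrite Q2R_opp in H11, H31, H33, H30, H21.
  cbv [alQ ahQ blQ bhQ dlQ dhQ smQ Q2R Qnum Qden] in Ha, Hb, Hd, H11, H31, H33, H30, H21.
  destruct (num_stab _ _ _ _ _ _ _ _ _ Ha Hb Hd H11 H31 H33 H30 H21 nQ_bounds) as [c1 [c2 [c3 c4]]].
  apply (stab_gen EW EW_eq x y HP He0 He2); auto.
Qed.

Lemma cont_eps f x : continuity_pt f x ->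
  forall eps, 0 < eps -> exists del, 0 < del /\ forall t, Rabs (t - x) < del -> Rabs (f t - f x) < eps.
Proof.
  intros H eps Heps. destruct (H eps Heps) as [alp [Halp Hf]].
  exists alp; split; auto. intros t Ht.
  destruct (Req_dec t x) as [->|Hne].
  - rewrite Rminus_diag, Rabs_R0; auto.
  - apply (Hf t). split. split. exact I. auto. exact Ht.
Qed.

Lemma eps_cont f x :
  (forall eps, 0 < eps -> exists del, 0 < del /\ forall t, Rabs (t - x) < del -> Rabs (f t - f x) < eps) ->
  continuity_pt f x.
Proof.
  intros H eps Heps. destruct (H eps Heps) as [del [Hdel Hf]].
  exists del; split; auto. intros t [_ Ht]. apply Hf. exact Ht.
Qed.

Lemma dcont f x l : derivable_pt_lim f x l -> continuity_pt f x.
Proof. intros H. apply derivable_continuous_pt. exists l. exact H. Qed.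

Definition F1 x y := ev (D 0 EW) x 0 y 0.
Definition F2 x y := ev (D 2 EW) x 0 y 0.
Definition xlR := Q2R xlQ. Definition xuR := Q2R xuQ.
Definition ylR := Q2R ylQ. Definition yuR := Q2R yuQ.
Definition y1R := Q2R y1Q. Definition y2R := Q2R y2Q.
Definition alR := Q2R alQ. Definition bhR := Q2R bhQ.

Lemma nums : xlR < xuR /\ ylR <= y1R /\ y1R < y2R /\ y2R <= yuR /\ 0 < alR /\ 0 < bhR /\
  xlR <= Q2R xa1Q /\ Q2R xb1Q <= xuR /\ xlR <= Q2R xa2Q /\ Q2R xb2Q <= xuR /\
  Q2R xa1Q <= Q2R xb1Q /\ Q2R xa2Q <= Q2R xb2Q.
Proof.
  unfold xlR, xuR, ylR, yuR, y1R, y2R, alR, bhR.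
  cbv [xlQ xuQ ylQ yuQ y1Q y2Q alQ bhQ xa1Q xb1Q xa2Q xb2Q Q2R Qnum Qden].
  repeat split; lra.
Qed.

Lemma x_Pc x : xlR <= x <= xuR -> Pc x.
Proof. unfold xlR, xuR, Pc. rewrite mu_val. cbv [xlQ xuQ Q2R Qnum Qden]. intros; lra. Qed.

Lemma F1_mono x x' y : xlR <= x -> x <= x' -> x' <= xuR -> ylR <= y <= yuR ->
  alR * (x' - x) <= F1 x' y - F1 x y.
Proof.
  intros H1 H2 H3 Hy. destruct (Req_dec x x') as [<-|Hne].
  - unfold F1. lra.
  - destruct (MVT_cor2 (fun t => F1 t y) (fun t => ev (D 0 (D 0 EW)) t 0 y 0) x x') as [c [Hc Hcr]].
    + lra.
    + intros c Hc. apply sound0. apply x_Pc. lra.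
    + rewrite Hc.
      destruct (chk_ok _ _ _ _ _ _ _ c y c_a) as [Hl _]. fold xlR xuR. lra. exact Hy.
      fold alR in Hl. apply Rmult_le_compat_r; lra.
Qed.

Lemma F2_lip x x' y : xlR <= x -> x <= x' -> x' <= xuR -> ylR <= y <= yuR ->
  Rabs (F2 x' y - F2 x y) <= bhR * (x' - x).
Proof.
  intros H1 H2 H3 Hy. destruct (Req_dec x x') as [<-|Hne].
  - unfold F2. rewrite Rminus_diag, Rabs_R0. lra.
  - destruct (MVT_cor2 (fun t => F2 t y) (fun t => ev (D 0 (D 2 EW)) t 0 y 0) x x') as [c [Hc Hcr]].
    + lra.
    + intros c Hc. apply sound0. apply x_Pc. lra.
    + rewrite Hc.
      destruct (chk_ok _ _ _ _ _ _ _ c y c_b') as [Hl Hh]. fold xlR xuR. lra. exact Hy.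
      fold bhR in Hh. rewrite Rabs_mult. rewrite (Rabs_right (x' - x)) by lra.
      apply Rmult_le_compat_r. lra.
      pose proof (proj1 (proj2 (proj2 (proj2 (proj2 (proj2 nums)))))).
      assert (0 < Q2R blQ) by (cbv [blQ Q2R Qnum Qden]; lra).
      rewrite Rabs_right; lra.
Qed.

Lemma F1_edges y : y1R <= y <= y2R -> F1 xlR y < 0 /\ 0 < F1 xuR y.
Proof.
  intros Hy. pose proof nums as (N1&N2&N3&N4&N5&N6&N7&N8&N9&N10&N11&N12).
  destruct (chk_ok _ _ _ _ _ _ _ xlR y c_e1) as [_ H1]. unfold xlR; lra. unfold y1R, y2R in Hy; lra.
  destruct (chk_ok _ _ _ _ _ _ _ xuR y c_e2) as [H2 _]. unfold xuR; lra. unfold y1R, y2R in Hy; lra.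
  cbv [Q2R Qnum Qden Qopp] in H1, H2. rewrite ?opp_IZR in H1. unfold F1. split; lra.
Qed.

Definition xs y := epsilon (inhabits 0) (fun z => xlR <= z <= xuR /\ F1 z y = 0).

Lemma xs_spec y : y1R <= y <= y2R -> xlR <= xs y <= xuR /\ F1 (xs y) y = 0.
Proof.
  intros Hy. pose proof nums as (N1&N2&N3&N4&N5&N6&N7&N8&N9&N10&N11&N12). unfold xs. apply epsilon_spec.
  destruct (F1_edges y Hy) as [E1 E2].
  destruct (IVT_interv (fun t => F1 t y) xlR xuR) as [z [Hz Hz0]].
  - intros a Ha. apply (dcont _ _ _ (sound0 (D 0 EW) a 0 y 0 (x_Pc a Ha))).
  - lra.
  - exact E1.
  - exact E2.
  - exists z; auto.
Qed.

Lemma xs_above y x : y1R <= y <= y2R -> xlR <= x <= xuR -> F1 x y < 0 -> x < xs y.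
Proof.
  intros Hy Hx Hf. pose proof nums as (N1&N2&N3&N4&N5&N6&N7&N8&N9&N10&N11&N12). destruct (xs_spec y Hy) as [Hz Hz0].
  destruct (Rlt_or_le x (xs y)) as [h|h]; auto. exfalso.
  assert (M := F1_mono (xs y) x y ltac:(lra) h ltac:(lra) ltac:(lra)). nra.
Qed.

Lemma xs_below y x : y1R <= y <= y2R -> xlR <= x <= xuR -> 0 < F1 x y -> xs y < x.
Proof.
  intros Hy Hx Hf. pose proof nums as (N1&N2&N3&N4&N5&N6&N7&N8&N9&N10&N11&N12). destruct (xs_spec y Hy) as [Hz Hz0].
  destruct (Rlt_or_le (xs y) x) as [h|h]; auto. exfalso.
  assert (M := F1_mono x (xs y) y ltac:(lra) h ltac:(lra) ltac:(lra)). nra.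
Qed.

Lemma xs_lip c c0 : y1R <= c <= y2R -> y1R <= c0 <= y2R ->
  alR * Rabs (xs c - xs c0) <= Rabs (F1 (xs c0) c).
Proof.
  intros Hc Hc0. pose proof nums as (N1&N2&N3&N4&N5&N6&N7&N8&N9&N10&N11&N12).
  destruct (xs_spec c Hc) as [Hz Hz0]. destruct (xs_spec c0 Hc0) as [Hw Hw0].
  destruct (Rle_or_lt (xs c) (xs c0)) as [h|h].
  - assert (M := F1_mono (xs c) (xs c0) c ltac:(lra) h ltac:(lra) ltac:(lra)).
    rewrite Rabs_left1 by lra. rewrite Rabs_right by nra. lra.
  - assert (M := F1_mono (xs c0) (xs c) c ltac:(lra) ltac:(lra) ltac:(lra) ltac:(lra)).
    rewrite Rabs_right by lra. rewrite Rabs_left1 by nra. lra.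
Qed.

Definition cl y := Rmax y1R (Rmin y y2R).
Lemma cl_in y : y1R <= cl y <= y2R.
Proof. pose proof nums as (N1&N2&N3&N4&N5&N6&N7&N8&N9&N10&N11&N12). unfold cl. split. apply Rmax_l. apply Rmax_lub. lra. apply Rmin_r. Qed.
Lemma cl_id y : y1R <= y <= y2R -> cl y = y.
Proof. intros H. unfold cl. rewrite Rmin_left by lra. rewrite Rmax_right; lra. Qed.
Lemma cl_lip y y0 : Rabs (cl y - cl y0) <= Rabs (y - y0).
Proof.
  pose proof nums as (N1&N2&N3&N4&N5&N6&N7&N8&N9&N10&N11&N12). unfold cl, Rmax, Rmin.
  repeat destruct Rle_dec; repeat (rewrite Rabs_left1 by lra || rewrite Rabs_right by lra); try lra;
  repeat (destruct (Rcase_abs (y - y0)); [rewrite Rabs_left by lra | rewrite Rabs_right by lra]);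
  try lra.
Qed.

Definition Hf y := F2 (xs (cl y)) (cl y).

Lemma Hf_cont y0 : continuity_pt Hf y0.
Proof.
  pose proof nums as (N1&N2&N3&N4&N5&N6&N7&N8&N9&N10&N11&N12). apply eps_cont. intros eps Heps.
  set (c0 := cl y0). set (X0 := xs c0).
  assert (Hc0 := cl_in y0). fold c0 in Hc0.
  destruct (xs_spec c0 Hc0) as [HX0 HX00]. fold X0 in HX0, HX00.
  assert (HP := x_Pc X0 HX0).
  destruct (cont_eps _ _ (dcont _ _ _ (sound2 (D 0 EW) X0 0 c0 0 HP)) (eps * alR / (2 * bhR))) as [d1 [Hd1 H1]].
  { apply Rmult_lt_0_compat. apply Rmult_lt_0_compat; lra. apply Rinv_0_lt_compat; lra. }
  destruct (cont_eps _ _ (dcont _ _ _ (sound2 (D 2 EW) X0 0 c0 0 HP)) (eps / 2)) as [d2 [Hd2 H2]].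
  { lra. }
  exists (Rmin d1 d2). split. apply Rmin_pos; auto.
  intros t Ht. set (c := cl t).
  assert (Hc := cl_in t). fold c in Hc.
  assert (Hct : Rabs (c - c0) < Rmin d1 d2) by (eapply Rle_lt_trans; [apply cl_lip | exact Ht]).
  assert (Hct1 : Rabs (c - c0) < d1) by (eapply Rlt_le_trans; [exact Hct | apply Rmin_l]).
  assert (Hct2 : Rabs (c - c0) < d2) by (eapply Rlt_le_trans; [exact Hct | apply Rmin_r]).
  specialize (H1 c Hct1). specialize (H2 c Hct2). cbv beta in H1, H2.
  fold (F1 X0 c) in H1. fold (F1 X0 c0) in H1. fold (F2 X0 c) in H2. fold (F2 X0 c0) in H2.
  rewrite HX00, Rminus_0_r in H1.
  unfold Hf. fold c c0. fold X0.
  assert (HL := xs_lip c c0 Hc Hc0). fold X0 in HL.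
  destruct (xs_spec c Hc) as [HXc _].
  assert (HF : Rabs (F2 (xs c) c - F2 X0 c) <= bhR * Rabs (xs c - X0)).
  { destruct (Rle_or_lt (xs c) X0) as [h|h].
    - rewrite Rabs_minus_sym, (Rabs_minus_sym (xs c)). rewrite (Rabs_right (X0 - xs c)) by lra.
      apply F2_lip; lra.
    - rewrite (Rabs_right (xs c - X0)) by lra. apply F2_lip; lra. }
  assert (HF2 : bhR * Rabs (xs c - X0) < eps / 2).
  { apply Rmult_lt_reg_l with alR. lra.
    apply Rle_lt_trans with (bhR * Rabs (F1 X0 c)). nra.
    apply Rlt_le_trans with (bhR * (eps * alR / (2 * bhR))). nra.
    right. field. lra. }
  replace (F2 (xs c) c - F2 X0 c0) with ((F2 (xs c) c - F2 X0 c) + (F2 X0 c - F2 X0 c0)) by ring.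
  eapply Rle_lt_trans. apply Rabs_triang. lra.
Qed.

Lemma Hf_y1 : Hf y1R < 0.
Proof.
  pose proof nums as (N1&N2&N3&N4&N5&N6&N7&N8&N9&N10&N11&N12).
  unfold Hf. rewrite cl_id by lra.
  assert (Hy : y1R <= y1R <= y2R) by lra.
  destruct (chk_ok _ _ _ _ _ _ _ (Q2R xa1Q) y1R c_e3) as [_ A1]; try (unfold y1R; lra); try lra.
  destruct (chk_ok _ _ _ _ _ _ _ (Q2R xb1Q) y1R c_e4) as [B1 _]; try (unfold y1R; lra); try lra.
  cbv [Q2R Qnum Qden Qopp] in A1, B1. rewrite ?opp_IZR in A1.
  fold (Q2R xa1Q) in A1.
  assert (Ha : Q2R xa1Q < xs y1R).
  { apply xs_above; auto. lra. unfold F1. cbv [Q2R Qnum Qden] in *. lra. }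
  assert (Hb : xs y1R < Q2R xb1Q).
  { apply xs_below; auto. lra. unfold F1. cbv [Q2R Qnum Qden] in *. lra. }
  destruct (chk_ok _ _ _ _ _ _ _ (xs y1R) y1R c_e5) as [_ C1]; try lra. unfold y1R; lra.
  cbv [Q2R Qnum Qden Qopp] in C1. rewrite ?opp_IZR in C1. unfold F2. lra.
Qed.

Lemma Hf_y2 : 0 < Hf y2R.
Proof.
  pose proof nums as (N1&N2&N3&N4&N5&N6&N7&N8&N9&N10&N11&N12).
  unfold Hf. rewrite cl_id by lra.
  assert (Hy : y1R <= y2R <= y2R) by lra.
  destruct (chk_ok _ _ _ _ _ _ _ (Q2R xa2Q) y2R c_e6) as [_ A1]; try (unfold y2R; lra); try lra.
  destruct (chk_ok _ _ _ _ _ _ _ (Q2R xb2Q) y2R c_e7) as [B1 _]; try (unfold y2R; lra); try lra.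
  cbv [Q2R Qnum Qden Qopp] in A1, B1. rewrite ?opp_IZR in A1.
  assert (Ha : Q2R xa2Q < xs y2R).
  { apply xs_above; auto. lra. unfold F1. cbv [Q2R Qnum Qden] in *. lra. }
  assert (Hb : xs y2R < Q2R xb2Q).
  { apply xs_below; auto. lra. unfold F1. cbv [Q2R Qnum Qden] in *. lra. }
  destruct (chk_ok _ _ _ _ _ _ _ (xs y2R) y2R c_e8) as [C1 _]; try lra. unfold y2R; lra.
  cbv [Q2R Qnum Qden Qopp] in C1. unfold F2. lra.
Qed.

Lemma existence : exists xi0 eta0, in_rect xi0 eta0 /\ is_equilibrium mu_ES c_ES xi0 eta0.
Proof.
  pose proof nums as (N1&N2&N3&N4&N5&N6&N7&N8&N9&N10&N11&N12).
  destruct (IVT_interv Hf y1R y2R) as [y0 [Hy0 H0]].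
  - intros a _. apply Hf_cont.
  - lra.
  - apply Hf_y1.
  - apply Hf_y2.
  - unfold Hf in H0. rewrite cl_id in H0 by lra.
    destruct (xs_spec y0 Hy0) as [Hx Hx0].
    exists (xs y0), y0. split.
    + change (xlR <= xs y0 <= xuR /\ ylR <= y0 <= yuR). split; lra.
    + assert (HP : Pc (xs y0)) by (apply x_Pc; lra).
      split; rewrite (DW1 EW EW_eq) by (auto; lia); assumption.
Qed.


Theorem corollary5p3 :
  (exists xi0 eta0, in_rect xi0 eta0 /\ is_equilibrium mu_ES c_ES xi0 eta0) /\
  (forall xi0 eta0 : R,
     in_rect xi0 eta0 ->
     is_equilibrium mu_ES c_ES xi0 eta0 ->
     forall l : Cpx, is_eigenvalue 4 (jacobian mu_ES c_ES xi0 eta0) l ->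
     Re l = 0).
Proof.
  split.
  - exact existence.
  - exact stab_final.
Qed.
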